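(* Let $M_{inf}=\begin{bmatrix}1&0&0&1\\1&1&0&1\end{bmatrix}$. The polyomino class $Av_{\mathfrak{P}}(M_{inf})$ has an infinite $p$-basis.
   Context: A polyomino is a finite union of unit cells of $\mathbb{Z}\times\mathbb{Z}$ that is connected via edge adjacency, up to translation. It is identified with the binary matrix of its minimal bounding rectangle: placing it in the positive quarter plane touching both axes, entry $(i,j)$ is $1$ iff the unit square $[j-1,j]\times[i-1,i]$ is a cell (rows numbered from bottom to top; in displayed matrices the first written row is the top row). A matrix $M'$ is a submatrix of $M$ if it is obtained by deleting rows and/or columns; the pattern order on polyominoes is the submatrix order restricted to polyominoes. $Av_{\mathfrak{P}}(M)$ is the set of polyominoes not containing $M$ as a submatrix; it is a polyomino class (downward closed set). The $p$-basis of a polyomino class $\mathcal{C}$ is the set of polyominoes not in $\mathcal{C}$ that are minimal for the pattern order among polyominoes not in $\mathcal{C}$. *)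

(* Defs.v *)
From mathcomp Require Import all_boot.
Set Implicit Arguments. Unset Strict Implicit. Unset Printing Implicit Defensive.

(* A binary matrix is stored as the list of its rows, in DISPLAY order
   (first row = top row), each row being the list of its entries left to right.
   The submatrix order is invariant under reversing the row order, so this
   convention is harmless. *)
Definition bmatrix := seq (seq bool).

Definition cell (M : bmatrix) (i j : nat) : bool := nth false (nth [::] M i) j.

Definition width (M : bmatrix) : nat := size (head [::] M).

Definition rectangular (M : bmatrix) : bool := all (fun r => size r == width M) M.

Definition adj (a b : nat * nat) : bool :=
  ((a.1 == b.1) && ((a.2 == b.2.+1) || (b.2 == a.2.+1))) ||
  ((a.2 == b.2) && ((a.1 == b.1.+1) || (b.1 == a.1.+1))).

Definition cells_connected (M : bmatrix) : Prop :=
  forall i j i' j', cell M i j -> cell M i' j' ->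
    exists p : seq (nat * nat),
      [/\ path adj (i, j) p, last (i, j) p = (i', j')
        & all (fun c => cell M c.1 c.2) p].

(* M is (the matrix of) a polyomino: a nonempty rectangular 0/1 matrix whose
   cells are connected, and which is the minimal bounding rectangle of its
   cells (every row and every column contains a cell). *)
Definition is_polyomino (M : bmatrix) : Prop :=
  [/\ rectangular M, has (has id) M, all (has id) M,
      (forall j, j < width M -> exists i, cell M i j)
    & cells_connected M].

Definition submatrix (N M : bmatrix) : Prop :=
  exists (rm cm : bitseq), N = map (mask cm) (mask rm M).

Definition Av (M : bmatrix) (P : bmatrix) : Prop :=
  is_polyomino P /\ ~ submatrix M P.

Definition in_pbasis (C : bmatrix -> Prop) (P : bmatrix) : Prop :=
  [/\ is_polyomino P, ~ C P &
      forall Q, is_polyomino Q -> submatrix Q P -> Q <> P -> C Q].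

Definition M_inf : bmatrix :=
  [:: [:: true; false; false; true];
      [:: true; true;  false; true]].

(* Main.v *)
Require Import Defs.
From mathcomp Require Import all_boot.
From mathcomp Require Import zify.
Set Implicit Arguments. Unset Strict Implicit. Unset Printing Implicit Defensive.

Definition sub (P : bmatrix) (RI CI : seq nat) : bmatrix :=
  [seq [seq cell P i j | j <- CI] | i <- RI].

Lemma seq_as_map (T : Type) (x0 : T) (s : seq T) : s = map (nth x0 s) (iota 0 (size s)).
Proof. by rewrite -[LHS](mkseq_nth x0). Qed.

Lemma sub_idx (P Q : bmatrix) : rectangular P -> submatrix Q P ->
  exists RI CI, [/\ subseq RI (iota 0 (size P)), subseq CI (iota 0 (width P)) & Q = sub P RI CI].
Proof.
move=> rect [rm [cm ->]].
exists (mask rm (iota 0 (size P))), (mask cm (iota 0 (width P))).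
split; try exact: mask_subseq.
rewrite {1}(seq_as_map [::] P) -map_mask -map_comp /sub.
apply/eq_in_map => i /mem_mask; rewrite mem_iota add0n => /= iP.
have /eqP szr : size (nth [::] P i) == width P.
  by move/allP: rect; apply; rewrite mem_nth.
by rewrite {1}(seq_as_map false (nth [::] P i)) -map_mask szr.
Qed.

Lemma cell_sub P RI CI a b : cell (sub P RI CI) a b =
  [&& a < size RI, b < size CI & cell P (nth 0 RI a) (nth 0 CI b)].
Proof.
rewrite /cell /sub.
case: (ltnP a (size RI)) => ha /=; last by rewrite (@nth_default _ [::] _ a) ?size_map //; case: b.
rewrite (nth_map 0) //.
case: (ltnP b (size CI)) => hb /=; last by rewrite nth_default ?size_map.
by rewrite (nth_map 0).
Qed.

Lemma nth_lt (RI : seq nat) n a : subseq RI (iota 0 n) -> a < size RI -> nth 0 RI a < n.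
Proof.
move=> sRI ha. have : nth 0 RI a \in iota 0 n by apply: (mem_subseq sRI); rewrite mem_nth.
by rewrite mem_iota.
Qed.

Lemma nth_mono (RI : seq nat) n a b : subseq RI (iota 0 n) -> a < size RI -> b < size RI ->
  (nth 0 RI a < nth 0 RI b) = (a < b).
Proof.
move=> sRI ha hb.
have so : sorted ltn RI by apply: (subseq_sorted ltn_trans sRI); exact: iota_ltn_sorted.
case: (ltngtP a b) => hab.
- by apply: (sorted_ltn_nth ltn_trans 0 so).
- apply/negbTE; rewrite -leqNgt ltnW //.
  by apply: (sorted_ltn_nth ltn_trans 0 so).
- by rewrite hab ltnn.
Qed.

Lemma subseq_full (RI : seq nat) n : subseq RI (iota 0 n) -> (forall i, i < n -> i \in RI) ->
  RI = iota 0 n.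
Proof.
move=> sRI full. apply/eqP; rewrite -(size_subseq_leqif sRI).
rewrite eqn_leq (size_subseq sRI) /=. apply: uniq_leq_size; first exact: iota_uniq.
by move=> x; rewrite mem_iota add0n => /full.
Qed.

Definition pc (h i j : nat) : bool :=
  (j == 0) || ((i == h.-1) && ((j == 1) || (j == h))) || ((i != h.-1) && ((j == i.+1) || (j == i.+2))).
Lemma pcP h i j : pc h i j -> j = 0 \/ (i = h.-1 /\ (j = 1 \/ j = h)) \/ (i <> h.-1 /\ (j = i.+1 \/ j = i.+2)).
Proof. rewrite /pc.
case/orP=> [/orP[/eqP|/andP[/eqP ? /orP[]/eqP]]|/andP[/eqP ? /orP[]/eqP]]; lia. Qed.
Lemma pcN h i j : ~~ pc h i j -> j <> 0 /\ (i = h.-1 -> j <> 1 /\ j <> h) /\ (i <> h.-1 -> j <> i.+1 /\ j <> i.+2).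
Proof. rewrite /pc. lia. Qed.
Lemma pcI h i j : j = 0 \/ (i = h.-1 /\ (j = 1 \/ j = h)) \/ (i <> h.-1 /\ (j = i.+1 \/ j = i.+2)) -> pc h i j.
Proof. rewrite /pc. lia. Qed.

Lemma occ h r s a b c d : 3 < h -> r < s -> s < h -> a < b -> b < c -> c < d -> d <= h ->
  pc h r a -> pc h s a -> ~~ pc h r b -> pc h s b -> ~~ pc h r c -> ~~ pc h s c -> pc h r d -> pc h s d ->
  [/\ r = h.-2, s = h.-1, b = 1, d = h & 1 < c < h].
Proof.
move=> h3 rs sh ab bc cd dh _ _ /pcN nrb /pcP psb /pcN nrc /pcN nsc /pcP prd /pcP psd.
have hs : s = h.-1.
  clear nrb nrc nsc. lia.
subst s.
have hd : d = h by clear nrb nrc nsc prd; lia.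
subst d.
have hr : r = h.-2 by clear nrb nrc nsc psb psd; lia.
have hb : b = 1 by clear nrb nrc nsc prd psd; lia.
split => //; lia.
Qed.

Definition phi (h i j : nat) : nat :=
  if j == 0 then h - i else if (i == h.-1) && (j == 1) then 0 else h + i + j.

Lemma phiP h i j : (j = 0 /\ phi h i j = h - i) \/ (j <> 0 /\ i = h.-1 /\ j = 1 /\ phi h i j = 0)
  \/ (j <> 0 /\ ~ (i = h.-1 /\ j = 1) /\ phi h i j = h + i + j).
Proof.
rewrite /phi; case: eqP => [|hj]; first by left.
case: (i =P h.-1) => [hi|hi] /=; case: (j =P 1) => [hj1|hj1] /=; lia.
Qed.

Lemma steph h i j j' c : 3 < h -> i < h -> j < j' -> j' <= h -> pc h i j -> pc h i j' ->
  ~~ (j < 1 < j') -> ~~ (j < c < j') -> 1 < c < h ->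
  (phi h i j' <= (phi h i j).+1 \/ phi h i j' <= h) /\ (phi h i j <= (phi h i j').+1 \/ phi h i j <= h).
Proof.
move=> ? ? ? ? /pcP ? /pcP ? ? ? ?.
have := phiP h i j; have := phiP h i j'. lia.
Qed.

Lemma stepv h i i' j : 3 < h -> i < i' -> i' < h -> j <= h -> pc h i j -> pc h i' j ->
  ~~ (i < h.-2 < i') ->
  (phi h i' j <= (phi h i j).+1 \/ phi h i' j <= h) /\ (phi h i j <= (phi h i' j).+1 \/ phi h i j <= h).
Proof.
move=> ? ? ? ? /pcP ? /pcP ? ?.
have := phiP h i j; have := phiP h i' j. lia.
Qed.

Lemma ident_row h i j i0 : 3 < h -> i < h -> j <= h -> pc h i j -> i0 < h ->
  phi h i j = h + 2 * i0 + 1 -> i = i0.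
Proof. move=> ? ? ? /pcP ? ?; have := phiP h i j. lia. Qed.

Lemma ident_col h i j j0 : 3 < h -> i < h -> j <= h -> pc h i j -> 0 < j0 <= h ->
  phi h i j = h + 2 * j0 - 1 -> j = j0.
Proof. move=> ? ? ? /pcP ? ?; have := phiP h i j. lia. Qed.

Lemma ident_col0 h i j : 3 < h -> i < h -> j <= h -> pc h i j -> phi h i j = h -> j = 0.
Proof. move=> ? ? ? /pcP ?; have := phiP h i j. lia. Qed.

Definition PP (h : nat) : bmatrix := mkseq (fun i => mkseq (fun j => pc h i j) h.+1) h.

Lemma cellPP h i j : cell (PP h) i j = [&& i < h, j < h.+1 & pc h i j].
Proof.
rewrite /cell /PP.
case: (ltnP i h) => hi /=; last by rewrite (@nth_default _ [::] _ i) ?size_mkseq //; case: j.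
rewrite nth_mkseq //.
case: (ltnP j h.+1) => hj /=; last by rewrite nth_default ?size_mkseq.
by rewrite nth_mkseq.
Qed.

Lemma sizePP h : size (PP h) = h.
Proof. by rewrite size_mkseq. Qed.

Lemma widthPP h : 0 < h -> width (PP h) = h.+1.
Proof. by case: h => // n _; rewrite /width /PP /mkseq /= size_map size_iota. Qed.

Lemma rectPP h : 0 < h -> rectangular (PP h).
Proof.
move=> h0; apply/allP => r /mapP [i _ ->]; by rewrite size_mkseq widthPP.
Qed.

Definition reach (M : bmatrix) (x y : nat * nat) :=
  exists p : seq (nat * nat),
      [/\ path adj x p, last x p = y & all (fun c => cell M c.1 c.2) p].

Lemma reach_refl M x : reach M x x.
Proof. by exists [::]. Qed.

Lemma reach_trans M x y z : reach M x y -> reach M y z -> reach M x z.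
Proof.
move=> [p [p1 p2 p3]] [q [q1 q2 q3]]; exists (p ++ q).
by rewrite cat_path last_cat all_cat p1 p2 q1 q2 p3 q3.
Qed.

Lemma reach_one M x y : adj x y -> cell M y.1 y.2 -> reach M x y.
Proof. by move=> a c; exists [:: y]; rewrite /= a c. Qed.

Lemma reach_one2 M x i j : adj x (i,j) -> cell M i j -> reach M x (i,j).
Proof. exact: reach_one. Qed.

Lemma adjC x y : adj x y = adj y x.
Proof. case: x y => [a b] [c d]; rewrite /adj /=. lia. Qed.

Lemma reach_sym M x y : cell M x.1 x.2 -> reach M x y -> reach M y x.
Proof.
move=> cx [p]; elim: p x cx => [|z p IH] x cx [/= p1 p2 p3]; first by rewrite -p2; apply: reach_refl.
move/andP: p1 => [axz pz]; move/andP: p3 => [cz pc'].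
apply: (reach_trans (IH z cz _)); first by split.
by apply: reach_one => //; rewrite adjC.
Qed.


Lemma pcell h i j : i < h -> j <= h -> pc h i j -> cell (PP h) i j.
Proof. by move=> hi hj hp; rewrite cellPP hi ltnS hj hp. Qed.

Lemma reach_col0 h i : i < h -> reach (PP h) (0,0) (i,0).
Proof.
elim: i => [|i IH] hi; first exact: reach_refl.
apply: (reach_trans (IH (ltnW hi))); apply: reach_one2; first by rewrite /adj /=; lia.
by apply: pcell => //; apply: pcI; lia.
Qed.

Lemma reach_stair h (h3 : 3 < h) i : i <= h.-2 -> reach (PP h) (0,0) (i,i.+1) /\ reach (PP h) (0,0) (i,i.+2).
Proof.
elim: i => [|i IH] hi.
  have r1 : reach (PP h) (0,0) (0,1).
    by apply: reach_one2; [rewrite /adj /=; lia | apply: pcell; [lia|lia|apply: pcI; lia]].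
  split => //; apply: (reach_trans r1); apply: reach_one2; first by rewrite /adj /=; lia.
  by apply: pcell; [lia|lia|apply: pcI; lia].
have [_ r2] := IH (ltnW hi).
have r3 : reach (PP h) (0,0) (i.+1,i.+2).
  apply: (reach_trans r2); apply: reach_one2; first by rewrite /adj /=; lia.
  by apply: pcell; [lia|lia|apply: pcI; lia].
split => //; apply: (reach_trans r3); apply: reach_one2; first by rewrite /adj /=; lia.
by apply: pcell; [lia|lia|apply: pcI; lia].
Qed.

Lemma reach_all h (h3 : 3 < h) i j : cell (PP h) i j -> reach (PP h) (0,0) (i,j).
Proof.
rewrite cellPP => /and3P [hi hj /pcP H].
case: H => [->|[[hi' [->|->]]|[hi' [->|->]]]].
- exact: reach_col0.
- apply: (reach_trans (reach_col0 hi)); apply: reach_one2; first by rewrite /adj /=; lia.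
  by apply: pcell; [lia|lia|apply: pcI; lia].
- have [_ r] := reach_stair h3 (leqnn h.-2).
  apply: (reach_trans r); apply: reach_one2; first by rewrite /adj /=; lia.
  by apply: pcell; [lia|lia|apply: pcI; lia].
- have hi2 : i <= h.-2 by lia.
  by have [r _] := reach_stair h3 hi2.
- have hi2 : i <= h.-2 by lia.
  by have [_ r] := reach_stair h3 hi2.
Qed.

Lemma cell_has (M : bmatrix) i j : cell M i j -> (nth [::] M i \in M) /\ has id (nth [::] M i).
Proof.
rewrite /cell => c.
case: (ltnP i (size M)) => hi; last by move: c; rewrite (@nth_default _ [::] _ i) //; case: j.
split; first exact: mem_nth.
case: (ltnP j (size (nth [::] M i))) => hj; last by move: c; rewrite nth_default.
by apply/hasP; exists (nth false (nth [::] M i) j) => //; apply: mem_nth.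
Qed.

Lemma polyPP h (h3 : 3 < h) : is_polyomino (PP h).
Proof.
have h0 : 0 < h by lia.
split.
- exact: rectPP.
- have c00 : cell (PP h) 0 0 by apply: pcell; [lia|lia|apply: pcI; lia].
  have [m hs] := cell_has c00. by apply/hasP; exists (nth [::] (PP h) 0).
- apply/allP => r /(nthP [::]) [i]; rewrite sizePP => hi <-.
  have ci0 : cell (PP h) i 0 by apply: pcell; [lia|lia|apply: pcI; lia].
  by have [_ ?] := cell_has ci0.
- move=> j; rewrite widthPP // => hj.
  case: (ltnP j 2) => j2.
    by exists 0; apply: pcell; [lia|lia|apply: pcI; lia].
  by exists (j - 2); apply: pcell; [lia|lia|apply: pcI; lia].
- move=> i j i' j' c1 c2.
  have r1 := reach_all h3 c1; have r2 := reach_all h3 c2.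
  have c00 : cell (PP h) 0 0 by apply: pcell; [lia|lia|apply: pcI; lia].
  have [p [? ? ?]] := reach_trans (reach_sym (x := (0,0)) c00 r1) r2.
  by exists p.
Qed.

Lemma mask_sub (P : bmatrix) rm cm : rectangular P ->
  map (mask cm) (mask rm P) = sub P (mask rm (iota 0 (size P))) (mask cm (iota 0 (width P))).
Proof.
move=> rect.
rewrite {1}(seq_as_map [::] P) -map_mask -map_comp /sub.
apply/eq_in_map => i /mem_mask; rewrite mem_iota add0n => /= iP.
have /eqP szr : size (nth [::] P i) == width P.
  by move/allP: rect; apply; rewrite mem_nth.
by rewrite {1}(seq_as_map false (nth [::] P i)) -map_mask szr.
Qed.

Lemma sub_submatrix (P : bmatrix) RI CI : rectangular P -> subseq RI (iota 0 (size P)) ->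
  subseq CI (iota 0 (width P)) -> submatrix (sub P RI CI) P.
Proof.
move=> rect /subseqP [rm _ ->] /subseqP [cm _ ->].
by exists rm, cm; rewrite mask_sub.
Qed.

Lemma containsPP k : submatrix M_inf (PP k.+4).
Proof.
have -> : M_inf = sub (PP k.+4) [:: k.+2; k.+3] [:: 0; 1; 2; k.+4].
  rewrite /sub /= !cellPP /pc /M_inf /=.
  have e1 : (k.+2 == k.+3) = false by lia.
  have e2 : (k.+2 == k.+4) = false by lia.
  have e3 : (k.+4 == k.+3) = false by lia.
  have e4 : (2 == k.+3) = false by lia.
  have e5 : (2 == k.+4) = false by lia.
  have e6 : (k.+3 == k.+4) = false by lia.
  rewrite !eqxx ?e1 ?e2 ?e3 ?e4 ?e5 ?e6 /=.
  have f1 : (k.+2 < k.+4) = true by lia.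
  have f2 : (k.+3 < k.+4) = true by lia.
  have f3 : (k.+4 < k.+1.+4) = true by lia.
  have f4 : (1 == k.+4) = false by lia.
  by rewrite f1 f2 f3 f4.
apply: sub_submatrix; first by apply: rectPP.
  rewrite sizePP.
  have -> : k.+4 = k.+2 + 2 by rewrite addn2.
  by rewrite iotaD; apply: suffix_subseq.
rewrite widthPP //.
have -> : k.+4.+1 = 3 + (k.+1 + 1) by lia.
rewrite iotaD iotaD.
have -> : 3 + k.+1 = k.+4 by lia.
change (subseq ([:: 0; 1; 2] ++ [:: k.+4]) (iota 0 3 ++ iota 3 k.+1 ++ iota k.+4 1)).
apply: cat_subseq => //.
exact: suffix_subseq.
Qed.

Lemma width_sub P RI CI : width (sub P RI CI) <= size CI.
Proof. by case: RI => //= i RI; rewrite /width /= size_map. Qed.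

Lemma ivt (T : eqType) (e : rel T) (Pr : pred T) (F : T -> nat) v :
  (forall x y, Pr x -> Pr y -> e x y -> F x < v -> F y <= v) ->
  forall x p, Pr x -> path e x p -> all Pr p -> F x <= v -> v <= F (last x p) ->
  exists z, Pr z /\ F z = v.
Proof.
move=> step x p; elim: p x => [|y p IH] x Px /=.
  by move=> _ _ h1 h2; exists x; split => //; apply/eqP; rewrite eqn_leq h1 h2.
move=> /andP [exy py] /andP [Py ap] h1 h2.
case: (ltngtP (F x) v) => hx.
- by apply: (IH y Py py ap) => //; apply: (step x y).
- by move: h1; rewrite leqNgt hx.
- by exists x.
Qed.

Lemma subPP_full h : sub (PP h) (iota 0 h) (iota 0 h.+1) = PP h.
Proof.
rewrite /sub /PP /mkseq; apply/eq_in_map => i; rewrite mem_iota => /andP [_ hi].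
apply/eq_in_map => j; rewrite mem_iota => /andP [_ hj].
rewrite cellPP; have -> : i < h by lia. by have -> : j < h.+1 by lia.
Qed.

Lemma phi_start h : phi h h.-1 1 = 0.
Proof. by rewrite /phi /= eqxx. Qed.

Lemma phi_end h : 3 < h -> phi h h.-1 h = h + h.-1 + h.
Proof. move=> h3; have := phiP h h.-1 h. lia. Qed.

Lemma mainPP h Q : 3 < h -> is_polyomino Q -> submatrix Q (PP h) -> submatrix M_inf Q -> Q = PP h.
Proof.
move=> h3 polyQ subQ subM.
have h0 : 0 < h by lia.
have [RI [CI [sRI sCI EQ]]] := sub_idx (rectPP h0) subQ.
rewrite sizePP in sRI; rewrite widthPP // in sCI.
case: polyQ => rectQ _ _ _ connQ.
have [RI' [CI' [sRI' sCI' EM]]] := sub_idx rectQ subM.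
have szQ : size Q = size RI by rewrite EQ size_map.
have wQ : width Q <= size CI by rewrite EQ; apply: width_sub.
set f := nth 0 RI; set g := nth 0 CI.
have cQ : forall x y, cell Q x y = [&& x < size RI, y < size CI & cell (PP h) (f x) (g y)].
  by move=> x y; rewrite EQ cell_sub.
have fmono : forall a b, a < size RI -> b < size RI -> (f a < f b) = (a < b).
  by move=> a b ha hb; apply: nth_mono sRI ha hb.
have gmono : forall a b, a < size CI -> b < size CI -> (g a < g b) = (a < b).
  by move=> a b ha hb; apply: nth_mono sCI ha hb.
have fbd : forall a, a < size RI -> f a < h by move=> a ha; apply: nth_lt sRI ha.
have gbd : forall a, a < size CI -> g a < h.+1 by move=> a ha; apply: nth_lt sCI ha.
case: RI' sRI' EM => [|x1 [|x2 [|? ?]]] sRI' EM; try by move: (congr1 size EM).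
case: CI' sCI' EM => [|y1 [|y2 [|y3 [|y4 [|? ?]]]]] sCI' EM;
  try by move: (congr1 (fun M => size (head [::] M)) EM); rewrite /sub /=.
move: EM; rewrite /sub /= => -[e1 e2 e3 e4 e5 e6 e7 e8].
have := subseq_sorted ltn_trans sRI' (iota_ltn_sorted 0 _) => /= /andP [x12 _].
have := subseq_sorted ltn_trans sCI' (iota_ltn_sorted 0 _) => /= /and4P [y12 y23 y34 _].
have hx2 : x2 < size RI.
  by rewrite -szQ; have := mem_subseq sRI' (mem_last x1 [:: x2]); rewrite mem_iota.
have hx1 : x1 < size RI by apply: ltn_trans hx2.
have hy4 : y4 < size CI.
  have := mem_subseq sCI' (mem_last y1 [:: y2; y3; y4]); rewrite mem_iota add0n /= => hh.
  exact: leq_trans hh wQ.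
have hy3 : y3 < size CI by apply: ltn_trans hy4.
have hy2 : y2 < size CI by apply: ltn_trans hy3.
have hy1 : y1 < size CI by apply: ltn_trans hy2.
have pcQ : forall x y, cell Q x y -> [/\ x < size RI, y < size CI & pc h (f x) (g y)].
  by move=> x y; rewrite cQ cellPP => /and5P [? ? ? ? ?].
have npcQ : forall x y, x < size RI -> y < size CI -> ~~ cell Q x y -> ~~ pc h (f x) (g y).
  move=> x y hx hy; rewrite cQ cellPP hx hy fbd // gbd //.
have [_ _ p11] := pcQ _ _ (esym e1).
have [_ _ p21] := pcQ _ _ (esym e5).
have [_ _ p22] := pcQ _ _ (esym e6).
have [_ _ p14] := pcQ _ _ (esym e4).
have [_ _ p24] := pcQ _ _ (esym e8).
have n12 := npcQ _ _ hx1 hy2 (negbT (esym e2)).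
have n13 := npcQ _ _ hx1 hy3 (negbT (esym e3)).
have n23 := npcQ _ _ hx2 hy3 (negbT (esym e7)).
have o1 : f x1 < f x2 by rewrite fmono.
have o2 : g y1 < g y2 by rewrite gmono.
have o3 : g y2 < g y3 by rewrite gmono.
have o4 : g y3 < g y4 by rewrite gmono.
have o5 : g y4 <= h by rewrite -ltnS; apply: gbd.
have [fx1 fx2 gy2 gy4 gy3] := occ h3 o1 (fbd _ hx2) o2 o3 o4 o5 p11 p21 n12 p22 n13 n23 p14 p24.
have ggap : forall a y, a.+1 < size CI -> y < size CI -> ~~ (g a < g y < g a.+1).
  move=> a y ha hy; rewrite !gmono //; last exact: ltnW.
  by apply/negP => /andP [u1 u2]; move: u2; rewrite ltnS leqNgt u1.
have fgap : forall a y, a.+1 < size RI -> y < size RI -> ~~ (f a < f y < f a.+1).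
  move=> a y ha hy; rewrite !fmono //; last exact: ltnW.
  by apply/negP => /andP [u1 u2]; move: u2; rewrite ltnS leqNgt u1.
have Hh : forall i a, a.+1 < size CI -> pc h i (g a) -> pc h i (g a.+1) -> i < h ->
  (phi h i (g a.+1) <= (phi h i (g a)).+1 \/ phi h i (g a.+1) <= h) /\
  (phi h i (g a) <= (phi h i (g a.+1)).+1 \/ phi h i (g a) <= h).
  move=> i a ha p1 p2 hi.
  apply: (steph (c := g y3)) => //.
  - by rewrite gmono // ltnW.
  - by rewrite -ltnS; apply: gbd.
  - by rewrite -gy2; apply: ggap.
  - exact: ggap.
have Hv : forall a j, a.+1 < size RI -> pc h (f a) j -> pc h (f a.+1) j -> j <= h ->
  (phi h (f a.+1) j <= (phi h (f a) j).+1 \/ phi h (f a.+1) j <= h) /\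
  (phi h (f a) j <= (phi h (f a.+1) j).+1 \/ phi h (f a) j <= h).
  move=> a j ha p1 p2 hj.
  apply: stepv => //.
  - by rewrite fmono // ltnW.
  - exact: fbd.
  - by rewrite -fx1; apply: fgap.
have c1 : cell Q x2 y2 by rewrite -e6.
have c2 : cell Q x2 y4 by rewrite -e8.
have [p [pp lp ap]] := connQ _ _ _ _ c1 c2.
pose F := fun z : nat * nat => phi h (f z.1) (g z.2).
have step : forall z z', cell Q z.1 z.2 -> cell Q z'.1 z'.2 -> adj z z' -> F z' <= (F z).+1 \/ F z' <= h.
  case=> a1 a2 [b1 b2] /= /pcQ [ha1 ha2 pa] /pcQ [hb1 hb2 pb].
  rewrite /adj /= /F /= => /orP [/andP [/eqP e /orP [/eqP e'|/eqP e']] | /andP [/eqP e /orP [/eqP e'|/eqP e']]].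
  - rewrite e e' in pa ha2 *.
    have gb : g b2 <= h by rewrite -ltnS; apply: gbd; apply: ltnW.
    by case: (Hh (f b1) b2 ha2 pb pa (fbd _ hb1)).
  - rewrite e' in pb hb2 *; rewrite e in pa *.
    by case: (Hh (f b1) a2 hb2 pa pb (fbd _ hb1)).
  - rewrite e e' in pa ha1 *.
    have gb : g b2 <= h by rewrite -ltnS; apply: gbd.
    by case: (Hv b1 (g b2) ha1 pb pa gb).
  - rewrite e' in pb hb1 *; rewrite e in pa *.
    have gb : g b2 <= h by rewrite -ltnS; apply: gbd.
    by case: (Hv a1 (g b2) hb1 pa pb gb).
have cover : forall v, h <= v -> v <= h + h.-1 + h -> exists z, cell Q z.1 z.2 /\ F z = v.
  move=> v hv1 hv2.
  apply: (@ivt _ adj (fun z => cell Q z.1 z.2) F v _ (x2, y2) p) => //.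
  - move=> z z' cz cz' a lt; case: (step z z' cz cz' a) => H.
      exact: leq_trans H lt.
    exact: leq_trans H hv1.
  - by rewrite /F /= fx2 gy2 phi_start.
  - by rewrite lp /F /= fx2 gy4 phi_end.
have rows : forall i0, i0 < h -> i0 \in RI.
  move=> i0 hi0.
  have b1 : h <= h + 2 * i0 + 1 by clear -hi0; lia.
  have b2 : h + 2 * i0 + 1 <= h + h.-1 + h by clear -hi0; lia.
  have [z [cz Fz]] := cover _ b1 b2.
  have [hz1 hz2 pz] := pcQ _ _ cz.
  have gz : g z.2 <= h by rewrite -ltnS; apply: gbd.
  have <- := ident_row h3 (fbd _ hz1) gz pz hi0 Fz.
  exact: mem_nth.
have cols : forall j0, j0 < h.+1 -> j0 \in CI.
  move=> j0 hj0.
  case: (posnP j0) => [->|j0p].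
    have b2 : h <= h + h.-1 + h by clear; lia.
    have [z [cz Fz]] := cover _ (leqnn h) b2.
    have [hz1 hz2 pz] := pcQ _ _ cz.
    have gz : g z.2 <= h by rewrite -ltnS; apply: gbd.
    have <- := ident_col0 h3 (fbd _ hz1) gz pz Fz.
    exact: mem_nth.
  have b1 : h <= h + 2 * j0 - 1 by clear -j0p hj0; lia.
  have b2 : h + 2 * j0 - 1 <= h + h.-1 + h by clear -j0p hj0; lia.
  have [z [cz Fz]] := cover _ b1 b2.
  have [hz1 hz2 pz] := pcQ _ _ cz.
  have gz : g z.2 <= h by rewrite -ltnS; apply: gbd.
  have hj : 0 < j0 <= h by clear -j0p hj0; lia.
  have <- := ident_col h3 (fbd _ hz1) gz pz hj Fz.
  exact: mem_nth.
by rewrite EQ (subseq_full sRI rows) (subseq_full sCI cols) subPP_full.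
Qed.

Lemma size_le_fold (s : seq bmatrix) x : x \in s ->
  size x <= foldr (fun y acc => maxn (size y) acc) 0 s.
Proof.
elim: s => // y s IH; rewrite in_cons => /orP [/eqP ->|/IH H] /=.
  exact: leq_maxl.
exact: leq_trans H (leq_maxr _ _).
Qed.

Theorem proposition10 :
  ~ exists s : seq bmatrix, forall P : bmatrix, in_pbasis (Av M_inf) P -> P \in s.
Proof.
move=> [s Hs].
have basis : forall k, in_pbasis (Av M_inf) (PP k.+4).
  move=> k; have h3 : 3 < k.+4 by [].
  split.
  - exact: polyPP.
  - by case => _; apply; apply: containsPP.
  - move=> Q pQ sQ neq; split => // sM; apply: neq; exact: mainPP.
set m := foldr (fun y acc => maxn (size y) acc) 0 s.
have := size_le_fold (Hs _ (basis m)).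
rewrite sizePP -/m; clear; lia.
Qed.
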